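(* Let $g$ satisfy Assumption B, let $L>0$ with $1/L>s_0$, and let $u,z\in\mathbb{R}$ with $u\in\mathcal{G}_L(z)$. Then: if $u>0$, $u\ge\max\big(\sigma(1/L),\ \tfrac{Lq_0(1/L)-z}{L}\big)$; if $u<0$, $u\le\min\big(-\sigma(1/L),\ -\tfrac{Lq_0(1/L)+z}{L}\big)$; if $u=0$, $|z|\le Lq_0(1/L)$. Here $\sigma(1/L)>0$ and $q_0(1/L)>0$.
   Context: Assumption B on $g:\mathbb{R}\to\mathbb{R}\cup\{+\infty\}$: (B1) lsc, symmetric, $g(0)=0$; (B2) $g(u)<\infty$ for some $u\ne0$; (B3) one of (B3a) $g$ twice differentiable on some $(0,\epsilon)$, $\limsup_{u\searrow0}g''(u)\in(-\infty,0)$; (B3b) same differentiability, $\lim_{u\searrow0}g''(u)=-\infty$; (B3c) $\liminf_{u\searrow0}g(u)>0$; (B4) $g\ge0$. $\operatorname{prox}_{sg}(q):=\operatorname{argmin}_{u\in\mathbb{R}}(\tfrac12|u-q|^2+sg(u))$. $s_0:=0$ if (B3b) or (B3c) holds, otherwise $s_0:=-1/\limsup_{u\searrow0}g''(u)$. For $s>0$: $\sigma(s):=\inf\{|u|:\ u\ne0,\ u\in\operatorname{prox}_{sg}(q)\text{ for some }q\}$ and $q_0(s):=\sup\{q\ge0:\ q|u|\le\tfrac12u^2+sg(u)\ \forall u\in\mathbb{R}\}$. The set-valued map $\mathcal{G}_L:\mathbb{R}\rightrightarrows\mathbb{R}$ is defined by: $u\in\mathcal{G}_L(z)$ iff $u$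 is a global minimizer of $v\mapsto -zv+\frac L2(v-u)^2+g(v)$ over $v\in\mathbb{R}$. *)

(* Defs.v *)
From Stdlib Require Import Reals ClassicalEpsilon.
From Coquelicot Require Import Coquelicot.
Open Scope R_scope.

Definition Rbar_max2 (x y : Rbar) : Rbar := if Rbar_lt_dec x y then y else x.
Definition Rbar_min2 (x y : Rbar) : Rbar := if Rbar_lt_dec x y then x else y.

(* real part of g : R -> R U {+oo} (used where g is finite) *)
Definition greal (g : R -> Rbar) : R -> R := fun u => real (g u).

Definition g2 (g : R -> Rbar) : R -> R := Derive_n (greal g) 2.

Definition limsup_right0 (f : R -> R) : Rbar :=
  Rbar_glb (fun y => exists d, 0 < d /\
    y = Rbar_lub (fun v => exists u, 0 < u < d /\ v = Finite (f u))).

Definition liminf_right0 (f : R -> Rbar) : Rbar :=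
  Rbar_lub (fun y => exists d, 0 < d /\
    y = Rbar_glb (fun v => exists u, 0 < u < d /\ v = f u)).

Definition lsc (g : R -> Rbar) : Prop :=
  forall (x M : R), Rbar_lt (Finite M) (g x) ->
    locally x (fun y => Rbar_lt (Finite M) (g y)).

Definition twice_diff_near0 (g : R -> Rbar) : Prop :=
  exists eps, 0 < eps /\ forall u, 0 < u < eps ->
    is_finite (g u) /\ ex_derive (greal g) u /\ ex_derive (Derive (greal g)) u.

Definition B1 (g : R -> Rbar) : Prop :=
  lsc g /\ (forall u, g (- u) = g u) /\ g 0 = Finite 0.
Definition B2 (g : R -> Rbar) : Prop := exists u, u <> 0 /\ is_finite (g u).
Definition B3a (g : R -> Rbar) : Prop :=
  twice_diff_near0 g /\ exists l : R, limsup_right0 (g2 g) = Finite l /\ l < 0.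
Definition B3b (g : R -> Rbar) : Prop :=
  twice_diff_near0 g /\ filterlim (g2 g) (at_right 0) (Rbar_locally m_infty).
Definition B3c (g : R -> Rbar) : Prop := Rbar_lt (Finite 0) (liminf_right0 g).
Definition B4 (g : R -> Rbar) : Prop := forall u, Rbar_le (Finite 0) (g u).

Definition AssumptionB (g : R -> Rbar) : Prop :=
  B1 g /\ B2 g /\ (B3a g \/ B3b g \/ B3c g) /\ B4 g.

Definition s0 (g : R -> Rbar) : R :=
  if excluded_middle_informative (B3b g \/ B3c g) then 0
  else - / real (limsup_right0 (g2 g)).

Definition prox_obj (g : R -> Rbar) (s q u : R) : Rbar :=
  Rbar_plus (Finite (/2 * (u - q) ^ 2)) (Rbar_mult (Finite s) (g u)).
Definition in_prox (g : R -> Rbar) (s q u : R) : Prop :=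
  forall v, Rbar_le (prox_obj g s q u) (prox_obj g s q v).

Definition sigma_g (g : R -> Rbar) (s : R) : Rbar :=
  Rbar_glb (fun y => exists u q, u <> 0 /\ in_prox g s q u /\ y = Finite (Rabs u)).

Definition q0_g (g : R -> Rbar) (s : R) : Rbar :=
  Rbar_lub (fun y => exists q, 0 <= q /\ y = Finite q /\
    forall u, Rbar_le (Finite (q * Rabs u))
                      (Rbar_plus (Finite (/2 * u ^ 2)) (Rbar_mult (Finite s) (g u)))).

Definition GL_obj (g : R -> Rbar) (L z u v : R) : Rbar :=
  Rbar_plus (Finite (- z * v + L / 2 * (v - u) ^ 2)) (g v).
Definition in_GL (g : R -> Rbar) (L z u : R) : Prop :=
  forall v, Rbar_le (GL_obj g L z u u) (GL_obj g L z u v).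

(* Main.v *)
Require Import Defs.
From Stdlib Require Import Reals Lra ClassicalEpsilon Classical.
From Coquelicot Require Import Coquelicot.
Open Scope R_scope.


Lemma glb_lb E x : E x -> Rbar_le (Rbar_glb E) x.
Proof. intros H. unfold Rbar_glb. destruct (Rbar_ex_glb E) as [l [H1 H2]]. simpl. now apply H1. Qed.
Lemma glb_ge E b : (forall x, E x -> Rbar_le b x) -> Rbar_le b (Rbar_glb E).
Proof. intros H. unfold Rbar_glb. destruct (Rbar_ex_glb E) as [l [H1 H2]]. simpl. now apply H2. Qed.
Lemma lub_ub E x : E x -> Rbar_le x (Rbar_lub E).
Proof. intros H. unfold Rbar_lub. destruct (Rbar_ex_lub E) as [l [H1 H2]]. simpl. now apply H1. Qed.
Lemma lub_le E b : (forall x, E x -> Rbar_le x b) -> Rbar_le (Rbar_lub E) b.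
Proof. intros H. unfold Rbar_lub. destruct (Rbar_ex_lub E) as [l [H1 H2]]. simpl. now apply H2. Qed.

Lemma mult_pinf s : 0 < s -> Rbar_mult (Finite s) p_infty = p_infty.
Proof.
  intros Hs. unfold Rbar_mult, Rbar_mult'.
  destruct (Rle_dec 0 s) as [H|H]; [|lra].
  destruct (Rle_lt_or_eq_dec 0 s H); [reflexivity|lra].
Qed.

Lemma mvt_le (F F1 : R -> R) a b x y : (forall v, a<v<b -> is_derive F v (F1 v)) ->
  a < x -> x <= y -> y < b -> exists c, x <= c <= y /\ F y - F x = F1 c * (y - x).
Proof.
  intros HD Hx Hxy Hy.
  destruct (MVT_gen F x y F1) as [c [Hc Heq]].
  - intros v Hv. rewrite Rmin_left in Hv by lra. rewrite Rmax_right in Hv by lra.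
    apply HD; lra.
  - intros v Hv. rewrite Rmin_left in Hv by lra. rewrite Rmax_right in Hv by lra.
    apply continuity_pt_filterlim. apply (ex_derive_continuous (K:=R_AbsRing) (V:=R_NormedModule) F v).
    eexists. apply HD; lra.
  - rewrite Rmin_left in Hc by lra. rewrite Rmax_right in Hc by lra.
    exists c; split; auto.
Qed.

Definition Conc (F F1 F2 : R -> R) (a b : R) : Prop :=
  forall v, a < v < b -> is_derive F v (F1 v) /\ is_derive F1 v (F2 v) /\ F2 v < 0.

Lemma F1_decr F F1 F2 a b x y : Conc F F1 F2 a b -> a < x -> x < y -> y < b -> F1 y < F1 x.
Proof.
  intros HC Hx Hxy Hy.
  destruct (mvt_le F1 F2 a b x y) as [c [Hc Heq]]; try lra.
  - intros v Hv. apply HC; auto.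
  - assert (F2 c < 0) by (apply HC; lra). nra.
Qed.

Lemma F1_decr_le F F1 F2 a b x y : Conc F F1 F2 a b -> a < x -> x <= y -> y < b -> F1 y <= F1 x.
Proof.
  intros HC Hx Hxy Hy. destruct (Rle_lt_or_eq_dec _ _ Hxy) as [H|H].
  - left. eapply F1_decr; eauto.
  - subst; lra.
Qed.

Lemma up_bound F F1 F2 a b x y : Conc F F1 F2 a b -> a < x -> x <= y -> y < b ->
  F y - F x <= F1 x * (y - x).
Proof.
  intros HC Hx Hxy Hy.
  destruct (mvt_le F F1 a b x y) as [c [Hc Heq]]; try lra.
  - intros v Hv. apply HC; auto.
  - assert (F1 c <= F1 x) by (eapply F1_decr_le; eauto; lra). nra.
Qed.

Lemma low_bound F F1 F2 a b x y : Conc F F1 F2 a b -> a < x -> x <= y -> y < b ->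
  F1 y * (y - x) <= F y - F x.
Proof.
  intros HC Hx Hxy Hy.
  destruct (mvt_le F F1 a b x y) as [c [Hc Heq]]; try lra.
  - intros v Hv. apply HC; auto.
  - assert (F1 y <= F1 c) by (eapply F1_decr_le; eauto; lra). nra.
Qed.

Lemma no_min F F1 F2 a b u : Conc F F1 F2 a b -> a < u < b ->
  (forall t, a < t < b -> F u <= F t) -> False.
Proof.
  intros HC Hu Hmin.
  destruct (Rle_dec (F1 u) 0) as [H|H].
  - remember ((u + b)/2) as t eqn:Ht. remember ((u + t)/2) as m eqn:Hm.
    assert (H3 : F1 m < F1 u) by (apply (F1_decr F F1 F2 a b u m HC); lra).
    assert (F t - F m <= F1 m * (t - m)) by (apply (up_bound F F1 F2 a b m t HC); lra).
    assert (F m - F u <= F1 u * (m - u)) by (apply (up_bound F F1 F2 a b u m HC); lra).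
    assert (F u <= F t) by (apply Hmin; lra).
    assert (Htm : 0 < t - m) by lra.
    assert (Hmu : 0 < m - u) by lra.
    assert (F1 m * (t - m) < 0) by nra.
    assert (F1 u * (m - u) <= 0) by nra.
    lra.
  - remember ((a + u)/2) as t eqn:Ht.
    assert (F1 u * (u - t) <= F u - F t) by (apply (low_bound F F1 F2 a b t u HC); lra).
    assert (F u <= F t) by (apply Hmin; lra).
    assert (0 < F1 u * (u - t)) by (apply Rmult_lt_0_compat; lra).
    lra.
Qed.

Lemma chord F F1 F2 b u A : Conc F F1 F2 0 b -> 0 < u -> u < A -> A < b ->
  0 <= F (u/2) -> 0 <= F u -> 0 <= F A -> u * F A <= F u * (2*A - u).
Proof.
  intros HC Hu HuA HA H0 H1 H2.
  assert (HB : F A - F u <= F1 u * (A - u)) by (apply (up_bound F F1 F2 0 b u A HC); lra).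
  destruct (Rle_dec (F1 u) 0) as [H|H].
  - assert (F1 u * (A - u) <= 0) by nra.
    assert (u * F A <= u * F u) by nra.
    assert (u * F u <= F u * (2*A - u)) by nra.
    lra.
  - assert (F1 u * (u - u/2) <= F u - F (u/2)) by (apply (low_bound F F1 F2 0 b (u/2) u HC); lra).
    nra.
Qed.

Lemma deriv_F (f : R -> R) q s v : ex_derive f v ->
  is_derive (fun x => /2*(x-q)^2 + s * f x) v ((v - q) + s * Derive f v).
Proof.
  intros H.
  apply (is_derive_plus (fun x => /2*(x-q)^2) (fun x => s * f x)).
  - auto_derive; auto. simpl. field.
  - apply is_derive_scal. now apply Derive_correct.
Qed.

Lemma deriv_F1 (f : R -> R) q s v : ex_derive (Derive f) v ->
  is_derive (fun x => (x - q) + s * Derive f x) v (1 + s * Derive (Derive f) v).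
Proof.
  intros H.
  apply (is_derive_plus (fun x => x - q) (fun x => s * Derive f x)).
  - auto_derive; auto.
  - apply is_derive_scal. now apply Derive_correct.
Qed.

Lemma prox_sym g s q u : (forall v, g (-v) = g v) -> in_prox g s q u -> in_prox g s (-q) (-u).
Proof.
  intros Hs H v. unfold in_prox, prox_obj in *. specialize (H (-v)).
  rewrite Hs in H. rewrite Hs.
  replace ((-u - -q)^2) with ((u-q)^2) by ring.
  replace ((v - -q)^2) with ((-v - q)^2) by ring. exact H.
Qed.

Definition P1 g s := exists d, 0 < d /\ forall u q, u <> 0 -> in_prox g s q u -> d <= Rabs u.
Definition InQ g s q := forall u, Rbar_le (Finite (q * Rabs u))
   (Rbar_plus (Finite (/2 * u ^ 2)) (Rbar_mult (Finite s) (g u))).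
Definition P2 g s := exists q, 0 < q /\ InQ g s q.

Lemma P1_of_pos g s d : (forall v, g (-v) = g v) ->
  (forall u q, 0 < u -> in_prox g s q u -> d <= u) ->
  forall u q, u <> 0 -> in_prox g s q u -> d <= Rabs u.
Proof.
  intros Hs H u q Hu Hp. destruct (Rlt_or_le 0 u) as [H0|H0].
  - rewrite Rabs_pos_eq by lra. eauto.
  - rewrite Rabs_left by lra. apply (H (-u) (-q)); [lra|]. now apply prox_sym.
Qed.

Lemma conc_case g s d : 0 < s -> 0 < d -> (forall v, g (-v) = g v) -> B4 g -> g 0 = Finite 0 ->
  (forall v, 0<v<d -> is_finite (g v) /\ ex_derive (greal g) v /\
       ex_derive (Derive (greal g)) v /\ Derive (Derive (greal g)) v < - / s) ->
  P1 g s /\ P2 g s.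
Proof.
  intros Hs Hd Hsym HB4 Hg0 HD.
  set (f := greal g).
  assert (HF2 : forall v, 0 < v < d -> 1 + s * Derive (Derive f) v < 0).
  { intros v Hv. destruct (HD v Hv) as [_ [_ [_ H]]].
    assert (s * Derive (Derive f) v < s * (- / s)) by (apply Rmult_lt_compat_l; auto).
    assert (s * (- / s) = -1) by (field; lra). fold f in H. lra. }
  assert (Hfin : forall v, 0 < v < d -> g v = Finite (f v) /\ 0 <= f v).
  { intros v Hv. destruct (HD v Hv) as [H _]. unfold f, greal. split.
    - now rewrite H.
    - specialize (HB4 v). rewrite <- H in HB4. exact HB4. }
  split.
  - exists d. split; auto. apply P1_of_pos; auto.
    intros u q Hu Hp. destruct (Rlt_or_le u d) as [Hud|Hud]; [|exact Hud].
    exfalso.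
    apply (no_min (fun x => /2*(x-q)^2 + s * f x) (fun x => (x - q) + s * Derive f x)
                  (fun x => 1 + s * Derive (Derive f) x) 0 d u).
    + intros v Hv. destruct (HD v Hv) as [_ [H1 [H2 _]]]. split; [|split].
      * now apply deriv_F.
      * now apply deriv_F1.
      * now apply HF2.
    + lra.
    + intros t Ht. specialize (Hp t). unfold prox_obj in Hp.
      rewrite (proj1 (Hfin u (conj Hu Hud))), (proj1 (Hfin t Ht)) in Hp.
      simpl in Hp. exact Hp.
  - set (A := d/2). exists (A/4). split; [unfold A; lra|].
    intros u. destruct (Rle_or_lt A (Rabs u)) as [HA|HA].
    + specialize (HB4 u). destruct (g u) as [r| |]; simpl in HB4.
      * simpl. assert (Rabs u * Rabs u = u^2) by (rewrite <- Rabs_mult; simpl; rewrite Rmult_1_r; apply Rabs_pos_eq; nra).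
        assert (0 <= Rabs u) by apply Rabs_pos.
        assert (0 <= s * r) by nra. unfold A in *. nra.
      * rewrite mult_pinf by auto. simpl. auto.
      * contradiction.
    + destruct (Req_dec u 0) as [H0|H0].
      * subst u. rewrite Hg0. simpl. rewrite Rabs_R0. lra.
      * set (w := Rabs u).
        assert (Hw : 0 < w) by (apply Rabs_pos_lt; auto).
        assert (Hgu : g u = g w).
        { unfold w. destruct (Rle_or_lt 0 u). rewrite Rabs_pos_eq; auto.
          rewrite Rabs_left by auto. now rewrite Hsym. }
        assert (Hu2 : u^2 = w^2) by (unfold w; rewrite <- (pow2_abs u); auto).
        rewrite Hgu, Hu2. fold w in HA.
        destruct (Hfin w) as [Hgw Hfw]; [unfold A in HA; lra|].
        rewrite Hgw. simpl.
        set (F := fun x => /2*(x-0)^2 + s * f x).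
        assert (HC : Conc F (fun x => (x - 0) + s * Derive f x)
                  (fun x => 1 + s * Derive (Derive f) x) 0 d).
        { intros v Hv. destruct (HD v Hv) as [_ [H1 [H2 _]]]. split; [|split].
          * now apply deriv_F.
          * now apply deriv_F1.
          * now apply HF2. }
        assert (Hpos : forall v, 0 < v < d -> 0 <= F v).
        { intros v Hv. destruct (Hfin v Hv) as [_ Hv']. unfold F. nra. }
        assert (Hch := chord F _ _ d w A HC Hw HA).
        assert (HFA : A^2/2 <= F A).
        { destruct (Hfin A) as [_ HA']; [unfold A; lra|]. unfold F. nra. }
        assert (u * F A <= F w * (2*A - w) -> False -> True) by tauto.
        assert (w * F A <= F w * (2*A - w)).
        { apply Hch; [unfold A; lra| apply Hpos; unfold A in *; lra
                     | apply Hpos; unfold A in *; lra | apply Hpos; unfold A; lra]. }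
        assert (HFw : 0 <= F w) by (apply Hpos; unfold A in *; lra).
        assert (HA0 : 0 < A) by (unfold A; lra).
        assert (w * (A^2/2) <= w * F A) by (apply Rmult_le_compat_l; lra).
        assert (Hx : w * (A^2/2) <= F w * (2*A - w)) by lra.
        assert (F w * (2*A - w) <= F w * (2*A)) by nra.
        unfold F in *. nra.
Qed.

Lemma g_abs (g : R -> Rbar) u : (forall v, g (-v) = g v) -> g u = g (Rabs u).
Proof.
  intros Hsym. destruct (Rle_or_lt 0 u). rewrite Rabs_pos_eq; auto.
  rewrite Rabs_left by auto. now rewrite Hsym.
Qed.

Lemma sq_abs u : u^2 = Rabs u ^2.
Proof. now rewrite <- (pow2_abs u). Qed.

Lemma c_case (g : R -> Rbar) s d c : 0 < s -> 0 < d -> 0 < c -> (forall v, g (-v) = g v) -> B4 g ->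
  g 0 = Finite 0 -> B2 g -> (forall v, 0 < v < d -> Rbar_le (Finite c) (g v)) ->
  P1 g s /\ P2 g s.
Proof.
  intros Hs Hd Hc Hsym HB4 Hg0 [w0 [Hw0 Hfw0]] Hcv.
  split.
  - set (w := Rabs w0).
    assert (Hw : 0 < w) by (apply Rabs_pos_lt; auto).
    set (G := real (g w)).
    assert (HgG : g w = Finite G).
    { unfold G, w. rewrite <- g_abs by auto. now rewrite Hfw0. }
    assert (HG : 0 <= G). { specialize (HB4 w). rewrite HgG in HB4. exact HB4. }
    set (M := w^2/2 + s*G).
    assert (HM : 0 < M) by (unfold M; nra).
    exists (Rmin d (Rmin (w/2) (s*c*w/(2*M)))). split.
    { repeat apply Rmin_pos; try lra. apply Rdiv_lt_0_compat; [repeat apply Rmult_lt_0_compat; lra | lra]. }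
    apply P1_of_pos; auto.
    intros u q Hu Hp.
    destruct (Rle_or_lt (Rmin d (Rmin (w/2) (s*c*w/(2*M)))) u) as [H|H]; [exact H|].
    exfalso.
    assert (Hud : u < d) by (eapply Rlt_le_trans; [exact H| apply Rmin_l]).
    assert (Huw : u < w/2).
    { eapply Rlt_le_trans; [exact H|]. eapply Rle_trans; [apply Rmin_r| apply Rmin_l]. }
    assert (Hus : u < s*c*w/(2*M)).
    { eapply Rlt_le_trans; [exact H|]. eapply Rle_trans; [apply Rmin_r| apply Rmin_r]. }
    assert (Hcu := Hcv u (conj Hu Hud)).
    assert (Hp0 := Hp 0). assert (Hpw := Hp w).
    unfold prox_obj in Hp0, Hpw. rewrite Hg0 in Hp0. rewrite HgG in Hpw.
    destruct (g u) as [r| |]; simpl in Hcu.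
    + simpl in Hp0, Hpw.
      assert (s * c <= s * r) by (apply Rmult_le_compat_l; lra).
      assert (Hqu : s * c <= u * q) by nra.
      assert (Hq : 0 < q) by nra.
      assert (Hq2 : q * (w/2) <= M) by (unfold M; nra).
      assert (Hx : s * c * (w/2) <= u * M) by nra.
      assert (Hy : u * (2*M) < s*c*w).
      { apply (Rmult_lt_compat_r (2*M)) in Hus; [|lra].
        unfold Rdiv in Hus. rewrite Rmult_assoc, Rinv_l in Hus by lra. lra. }
      lra.
    + rewrite mult_pinf in Hp0 by auto. simpl in Hp0. exact Hp0.
    + exact Hcu.
  - exists (Rmin (d/2) (s*c/d)). split.
    { apply Rmin_pos; [lra| apply Rdiv_lt_0_compat; nra]. }
    intros u. rewrite (g_abs g u Hsym), (sq_abs u).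
    set (w := Rabs u). assert (Hw : 0 <= w) by apply Rabs_pos.
    assert (Hq1 := Rmin_l (d/2) (s*c/d)). assert (Hq2 := Rmin_r (d/2) (s*c/d)).
    set (q := Rmin (d/2) (s*c/d)) in *.
    assert (Hq0 : 0 <= q) by (apply Rmin_glb; [lra| apply Rlt_le, Rdiv_lt_0_compat; nra]).
    specialize (HB4 w).
    destruct (Rle_or_lt d w) as [Hdw|Hdw].
    + destruct (g w) as [r| |]; simpl in HB4.
      * simpl. assert (0 <= s * r) by nra. nra.
      * rewrite mult_pinf by auto. simpl. auto.
      * contradiction.
    + destruct (Req_dec w 0) as [H0|H0].
      * rewrite H0, Hg0. simpl. lra.
      * assert (Hcw := Hcv w (conj (ltac:(lra) : 0 < w) Hdw)).
        destruct (g w) as [r| |]; simpl in Hcw.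
        -- simpl. assert (q * w <= s * c / d * w) by (apply Rmult_le_compat_r; lra).
           assert (s * c / d * w <= s * c).
           { unfold Rdiv. rewrite Rmult_assoc. 
             assert (/ d * w <= 1).
             { apply (Rmult_le_reg_l d); [lra|]. rewrite <- Rmult_assoc, Rinv_r by lra. lra. }
             assert (0 < s * c) by nra. nra. }
           assert (s * c <= s * r) by (apply Rmult_le_compat_l; lra).
           nra.
        -- rewrite mult_pinf by auto. simpl. auto.
        -- contradiction.
Qed.

Lemma GL_prox (g : R -> Rbar) L z u : 0 < L -> B4 g -> g 0 = Finite 0 -> in_GL g L z u ->
  (exists r, g u = Finite r) /\ in_prox g (/L) (u + /L*z) u.
Proof.
  intros HL HB4 Hg0 H.
  assert (Hs : 0 < /L) by (apply Rinv_0_lt_compat; auto).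
  assert (Hr : exists r, g u = Finite r).
  { assert (H0 := H 0). unfold GL_obj in H0. rewrite Hg0 in H0.
    specialize (HB4 u). destruct (g u) as [r| |]; simpl in *; eauto; contradiction. }
  split; auto. destruct Hr as [r Hr].
  intros v. unfold prox_obj. rewrite Hr. specialize (H v). unfold GL_obj in H.
  rewrite Hr in H. specialize (HB4 v).
  destruct (g v) as [rv| |]; simpl in HB4.
  - simpl in H |- *.
    assert (E : (/ 2 * (v - (u + / L * z)) ^ 2 + / L * rv) - (/ 2 * (u - (u + / L * z)) ^ 2 + / L * r)
       = /L * ((- z * v + L / 2 * (v - u) ^ 2 + rv) - (- z * u + L / 2 * (u - u) ^ 2 + r))) by (field; lra).
    assert (0 <= /L * ((- z * v + L / 2 * (v - u) ^ 2 + rv) - (- z * u + L / 2 * (u - u) ^ 2 + r))).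
    { apply Rmult_le_pos; lra. }
    lra.
  - rewrite mult_pinf by auto. simpl. auto.
  - contradiction.
Qed.

Lemma ball0 (e : posreal) y : 0 < y < e -> ball 0 e y.
Proof.
  intros H. change (Rabs (y - 0) < e). rewrite Rminus_0_r, Rabs_pos_eq; lra.
Qed.

Lemma g2_eq g v : g2 g v = Derive (Derive (greal g)) v.
Proof. reflexivity. Qed.

Lemma conc_from (g : R -> Rbar) s d : 0 < s -> 0 < d -> Defs.B1 g -> B4 g -> twice_diff_near0 g ->
  (forall v, 0 < v < d -> g2 g v < - / s) -> P1 g s /\ P2 g s.
Proof.
  intros Hs Hd [_ [Hsym Hg0]] HB4 [eps [Heps Htd]] H2.
  apply (conc_case g s (Rmin d eps)); auto.
  - apply Rmin_pos; auto.
  - intros v Hv.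
    assert (Hv1 : 0 < v < d) by (split; [lra| eapply Rlt_le_trans; [apply Hv| apply Rmin_l]]).
    assert (Hv2 : 0 < v < eps) by (split; [lra| eapply Rlt_le_trans; [apply Hv| apply Rmin_r]]).
    destruct (Htd v Hv2) as [A [B C]]. repeat split; auto.
    rewrite <- g2_eq. auto.
Qed.

Lemma P12 g s : AssumptionB g -> 0 < s -> s0 g < s -> P1 g s /\ P2 g s.
Proof.
  intros HA Hs Hs0. destruct HA as [HB1 [HB2 [HB3 HB4]]].
  destruct HB1 as [Hlsc [Hsym Hg0]] eqn:EB1.
  unfold s0 in Hs0.
  destruct (excluded_middle_informative (B3b g \/ B3c g)) as [Hbc|Hn].
  - destruct Hbc as [[Htd Hlim]|Hc].
    + assert (H := Hlim (fun y => y < - / s) (ex_intro _ (- / s) (fun x Hx => Hx))).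
      destruct H as [e He].
      apply (conc_from g s e); auto.
      * apply cond_pos.
      * intros v Hv. apply He; [apply ball0; auto| lra].
    + unfold B3c, liminf_right0 in Hc.
      set (S := fun y => exists d, 0 < d /\ y = Rbar_glb (fun v => exists u, 0 < u < d /\ v = g u)) in Hc.
      assert (Hex : exists y, S y /\ Rbar_lt (Finite 0) y).
      { apply NNPP. intros Hne.
        assert (Rbar_le (Rbar_lub S) (Finite 0)).
        { apply lub_le. intros x Hx. apply Rbar_not_lt_le. intros Hl. apply Hne; eauto. }
        apply (Rbar_lt_not_le _ _ Hc); auto. }
      destruct Hex as [y [[d [Hd Hy]] Hy0]].
      assert (Hcex : exists c, 0 < c /\ Rbar_le (Finite c) y).
      { destruct y as [r| |]; simpl in Hy0.
        - exists r. simpl. split; lra.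
        - exists 1. simpl. split; [lra|auto].
        - contradiction. }
      destruct Hcex as [c [Hc0 Hcy]].
      apply (c_case g s d c); auto.
      intros v Hv. eapply Rbar_le_trans; [exact Hcy|]. rewrite Hy.
      apply glb_lb. exists v. auto.
  - assert (Ha : B3a g) by (destruct HB3 as [H|H]; [exact H| exfalso; auto]).
    destruct Ha as [Htd [l [Hl Hl0]]].
    rewrite Hl in Hs0. simpl in Hs0.
    assert (Hls : l < - / s).
    { assert (0 < -l) by lra.
      assert (/ (-l) < s) by (rewrite <- Ropp_inv_permute by lra; lra).
      assert (1 < s * (-l)).
      { apply (Rmult_lt_compat_r (-l)) in H0; [|lra]. rewrite Rinv_l in H0 by lra. lra. }
      assert (/s < -l).
      { apply (Rmult_lt_reg_l s); [lra|]. rewrite Rinv_r by lra. lra. }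
      lra. }
    unfold limsup_right0 in Hl.
    set (S := fun y => exists d, 0 < d /\
      y = Rbar_lub (fun v => exists u, 0 < u < d /\ v = Finite (g2 g u))) in Hl.
    assert (Hex : exists y, S y /\ Rbar_lt y (Finite (- / s))).
    { apply NNPP. intros Hne.
      assert (Rbar_le (Finite (- / s)) (Rbar_glb S)).
      { apply glb_ge. intros x Hx. apply Rbar_not_lt_le. intros Hlt. apply Hne; eauto. }
      rewrite Hl in H. simpl in H. lra. }
    destruct Hex as [y [[d [Hd Hy]] Hy0]].
    apply (conc_from g s d); auto.
    intros v Hv.
    assert (Hle : Rbar_le (Finite (g2 g v)) y).
    { rewrite Hy. apply lub_ub. exists v. auto. }
    assert (Hlt := Rbar_le_lt_trans _ _ _ Hle Hy0). exact Hlt.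
Qed.

Theorem corollary4p7 (g : R -> Rbar) (L u z : R) :
  AssumptionB g -> 0 < L -> s0 g < / L -> in_GL g L z u ->
  Rbar_lt (Finite 0) (sigma_g g (/ L)) /\
  Rbar_lt (Finite 0) (q0_g g (/ L)) /\
  (0 < u ->
     Rbar_le (Rbar_max2 (sigma_g g (/ L))
                (Rbar_mult (Finite (/ L))
                   (Rbar_minus (Rbar_mult (Finite L) (q0_g g (/ L))) (Finite z))))
             (Finite u)) /\
  (u < 0 ->
     Rbar_le (Finite u)
             (Rbar_min2 (Rbar_opp (sigma_g g (/ L)))
                (Rbar_opp (Rbar_mult (Finite (/ L))
                   (Rbar_plus (Rbar_mult (Finite L) (q0_g g (/ L))) (Finite z)))))) /\
  (u = 0 -> Rbar_le (Finite (Rabs z)) (Rbar_mult (Finite L) (q0_g g (/ L)))).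
Proof.
  intros HA HL Hs0 HG.
  assert (Hs : 0 < / L) by (apply Rinv_0_lt_compat; auto).
  destruct (P12 g (/L) HA Hs Hs0) as [[d [Hd HP1]] [qp [Hqp HP2]]].
  destruct HA as [[Hlsc [Hsym Hg0]] [[w0 [Hw0 Hfw0]] [_ HB4]]].
  destruct (GL_prox g L z u HL HB4 Hg0 HG) as [[r Hr] Hp].
  set (s := / L) in *. set (q := u + s * z) in *.
  assert (Hsig : Rbar_le (Finite d) (sigma_g g s)).
  { apply glb_ge. intros x [u' [q' [Hu' [Hp' Hx]]]]. subst x. simpl. eapply HP1; eauto. }
  assert (Hsig0 : Rbar_lt (Finite 0) (sigma_g g s)) by (eapply Rbar_lt_le_trans; [|exact Hsig]; simpl; lra).
  set (w := Rabs w0).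
  assert (Hw : 0 < w) by (apply Rabs_pos_lt; auto).
  set (G := real (g w)).
  assert (HgG : g w = Finite G).
  { unfold G, w. rewrite <- g_abs by auto. now rewrite Hfw0. }
  assert (HQup : Rbar_le (q0_g g s) (Finite ((w^2/2 + s*G)/w))).
  { apply lub_le. intros x [q' [Hq' [Hx Hin]]]. subst x. simpl.
    specialize (Hin w). rewrite HgG in Hin. simpl in Hin.
    rewrite (Rabs_pos_eq w) in Hin by lra.
    apply (Rmult_le_reg_r w); auto. unfold Rdiv. rewrite Rmult_assoc, Rinv_l by lra. lra. }
  assert (HQlow : Rbar_le (Finite qp) (q0_g g s)).
  { apply lub_ub. exists qp. repeat split; auto; lra. }
  destruct (q0_g g s) as [Q| |] eqn:EQ; simpl in HQup, HQlow; try contradiction.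
  assert (Hp0 := Hp 0). unfold prox_obj in Hp0. rewrite Hr, Hg0 in Hp0. simpl in Hp0.
  assert (HQq : forall q', InQ g s q' -> q' * Rabs u <= q * u).
  { intros q' Hin. specialize (Hin u). rewrite Hr in Hin. simpl in Hin.
    assert (u^2 = u*u) by ring. nra. }
  assert (Hsigu : u <> 0 -> Rbar_le (sigma_g g s) (Finite (Rabs u))).
  { intros Hu0. apply glb_lb. exists u, q. auto. }
  split; [exact Hsig0|]. split; [simpl; lra|].
  split; [|split].
  - intros Hu.
    assert (HQ : Q <= q).
    { assert (Rbar_le (Finite Q) (Finite q)).
      { rewrite <- EQ. apply lub_le. intros x [q' [Hq' [Hx Hin]]]. subst x. simpl.
        assert (H := HQq q' Hin). rewrite Rabs_pos_eq in H by lra.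
        apply (Rmult_le_reg_r u); auto. }
      exact H. }
    assert (Hsu := Hsigu ltac:(lra)). rewrite Rabs_pos_eq in Hsu by lra.
    unfold Rbar_max2. destruct Rbar_lt_dec; auto.
    simpl. unfold q in HQ.
    assert (E : s * (L * Q + - z) = Q - s * z) by (unfold s; field; lra). rewrite E. lra.
  - intros Hu.
    assert (HQ : Q <= - q).
    { assert (Rbar_le (Finite Q) (Finite (-q))).
      { rewrite <- EQ. apply lub_le. intros x [q' [Hq' [Hx Hin]]]. subst x. simpl.
        assert (H := HQq q' Hin). rewrite Rabs_left in H by lra.
        apply (Rmult_le_reg_r (-u)); lra. }
      exact H. }
    assert (Hsu := Hsigu ltac:(lra)). rewrite Rabs_left in Hsu by lra.
    unfold Rbar_min2. destruct Rbar_lt_dec.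
    + destruct (sigma_g g s) as [S| |]; simpl in *; auto. lra.
    + simpl. unfold q in HQ.
      assert (E : - (s * (L * Q + z)) = - Q - s * z) by (unfold s; field; lra). rewrite E. lra.
  - intros Hu. subst u.
    assert (Hin : InQ g s (Rabs q)).
    { intros v. specialize (HB4 v).
      destruct (g v) as [rv| |] eqn:Ev; simpl in HB4.
      - simpl. assert (H1 := Hp v). assert (H2 := Hp (-v)).
        unfold prox_obj in H1, H2. rewrite Hr in H1, H2. rewrite Hsym, Ev in H2. rewrite Ev in H1.
        simpl in H1, H2. rewrite <- Rabs_mult.
        destruct (Rle_or_lt 0 (q * v)).
        + rewrite Rabs_pos_eq by lra. assert (r = 0) by (rewrite Hg0 in Hr; congruence). subst r. nra.
        + rewrite Rabs_left by lra. assert (r = 0) by (rewrite Hg0 in Hr; congruence). subst r. nra.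
      - rewrite mult_pinf by auto. simpl. auto.
      - contradiction. }
    assert (Rbar_le (Finite (Rabs q)) (Finite Q)).
    { rewrite <- EQ. apply lub_ub. exists (Rabs q). repeat split; auto. apply Rabs_pos. }
    simpl in H |- *. unfold q in H. rewrite Rplus_0_l, Rabs_mult, (Rabs_pos_eq s) in H by lra.
    apply (Rmult_le_compat_l L) in H; [|lra].
    unfold s in H. rewrite <- Rmult_assoc, Rinv_r, Rmult_1_l in H by lra. exact H.
Qed.
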